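(* Let $B_0\subset\Omega_\infty$ be an open set containing the identity, $B=B_0B_0^{-1}$, $B_2=B\cdot B$, $B_3=B\cdot B\cdot B$. Let $\nu$ be a probability measure on $X$ and $y_1,\dots,y_r\in X$. Then $$\sum_{i=1}^r\nu(y_iB)^{1/2}\ll\frac{\mathrm{vol}\,B_3}{\mathrm{vol}\,B_0}\Big(\#\{(i,j):y_iB_2\cap y_jB_2\neq\emptyset\}\Big)^{1/2}.$$
   Context: $\mathbf{G}$ is a semisimple group over $\mathbb{Q}$, $G=\mathbf{G}(\mathbb{R})$, $K_f\subset\mathbf{G}(\mathbb{A}_f)$ an open compact subgroup, $X=\mathbf{G}(\mathbb{Q})\backslash\mathbf{G}(\mathbb{A})/K_f$, with $G$ acting on the right; $yS=\{ys:s\in S\}\subset X$ for $y\in X$, $S\subset G$. $\Omega_\infty\subset G$ is a fixed compact set, $\mathrm{vol}$ a Haar measure on $G$. Implicit constants may depend on $\mathbf{G}$ and the fixed data ($K_f$, $\Omega_\infty$, a fixed embedding $\rho$ and compact $\Omega\subset\mathbf{G}(\mathbb{A})$). *)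

(* Defs.v *)
From HB Require Import structures.
From mathcomp Require Import all_boot all_order all_algebra.
From mathcomp Require Import all_classical all_reals all_analysis.
Set Implicit Arguments. Unset Strict Implicit. Unset Printing Implicit Defensive.
Import Order.TTheory GRing.Theory Num.Theory.
Local Open Scope classical_set_scope.
Local Open Scope ring_scope.

Definition is_topological_group (G : ptopologicalType)
  (mul : G -> G -> G) (inv : G -> G) (one : G) : Prop :=
  [/\ (forall a b c, mul a (mul b c) = mul (mul a b) c),
      (forall a, mul one a = a),
      (forall a, mul (inv a) a = one),
      continuous (fun p : G * G => mul p.1 p.2)
    & continuous inv].

Notation borel G := (g_sigma_algebraType (@open G)).

Definition is_haar_measure (R : realType) (G : ptopologicalType)
  (mul : G -> G -> G) (vol : {measure set (borel G) -> \bar R}) : Prop :=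
  [/\ (forall (g : G) (A : set G), measurable (A : set (borel G)) ->
          vol (mul g @` A) = vol A),
      (forall K : set G, compact K -> (vol K < +oo)%E)
    & (forall U : set G, open U -> U !=set0 -> (0 < vol U)%E)].

Definition is_right_action (G X : Type) (mul : G -> G -> G) (one : G)
  (act : X -> G -> X) : Prop :=
  (forall x, act x one = x) /\
  (forall x g h, act (act x g) h = act x (mul g h)).

Definition setmul (G : Type) (mul : G -> G -> G) (A B : set G) : set G :=
  [set mul a b | a in A & b in B].
Definition setinv (G : Type) (inv : G -> G) (A : set G) : set G := inv @` A.

Definition orbit_set (G X : Type) (act : X -> G -> X) (y : X) (S : set G)
  : set X := act y @` S.

(* Main.v *)
Require Import Defs.
From HB Require Import structures.
From mathcomp Require Import all_boot all_order all_algebra.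
From mathcomp Require Import all_classical all_reals all_analysis.
From mathcomp Require Import measurable_realfun ring lra.
Import Order.TTheory GRing.Theory Num.Theory.
Local Open Scope classical_set_scope.
Local Open Scope ring_scope.

Section Grp.
Variables (G : ptopologicalType) (mul : G -> G -> G) (inv : G -> G) (one : G).
Hypothesis hG : is_topological_group mul inv one.

Lemma gmulV a : mul a (inv a) = one.
Proof.
case: hG => A L I _ _.
rewrite -[LHS]L -(I (inv a)) -A (A (inv a)) I L I //.
Qed.

Lemma gmul1r a : mul a one = a.
Proof.
case: hG => A L I _ _.
by rewrite -(I a) A gmulV L.
Qed.

Lemma cont_mulr c : continuous (fun x => mul x c).
Proof.
case: hG => _ _ _ cm _ x.
have -> : (fun x => mul x c) = (fun p : G * G => mul p.1 p.2) \o (fun x => (x, c)) by [].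
apply: continuous_comp; last exact: cm.
apply: cvg_pair; [exact: cvg_id | exact: cvg_cst].
Qed.

Lemma open_setmul A S : open A -> open (setmul mul A S).
Proof.
move=> oA.
have -> : setmul mul A S = \bigcup_(s in S) ((fun x => mul x (inv s)) @^-1` A).
  apply/seteqP; split => x.
    case=> a Aa [s Ss <-]; exists s => //=.
    case: hG => As _ _ _ _. by rewrite -As gmulV gmul1r.
  case=> s Ss /= Ax; exists (mul x (inv s)) => //; exists s => //.
  case: hG => As _ I _ _. by rewrite -As I gmul1r.
apply: bigcup_open => s _.
by move/continuousP: (cont_mulr (inv s)); apply.
Qed.

Lemma compact_setmul P Q : compact P -> compact Q -> compact (setmul mul P Q).
Proof.
move=> cP cQ.
have -> : setmul mul P Q = [set (fun p : G * G => mul p.1 p.2) x | x in P `*` Q].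
  apply/seteqP; split => x.
    by case=> a Pa [b Qb <-]; exists (a, b).
  by case=> [[a b] [/= Pa Qb] <-]; exists a => //; exists b.
apply: continuous_compact; last exact: compact_setX.
apply: continuous_subspaceT; by case: hG.
Qed.

Lemma compact_setinv P : compact P -> compact (setinv inv P).
Proof.
move=> cP; apply: continuous_compact => //.
apply: continuous_subspaceT; by case: hG.
Qed.
Lemma setmulS A A' S S' : A `<=` A' -> S `<=` S' -> setmul mul A S `<=` setmul mul A' S'.
Proof. by move=> hA hS x [a Aa [b Sb <-]]; exists a; [exact: hA|exists b => //; exact: hS]. Qed.

Lemma setinvS A A' : A `<=` A' -> setinv inv A `<=` setinv inv A'.
Proof. by move=> hA x [a Aa <-]; exists a => //; exact: hA. Qed.
End Grp.
Arguments gmulV {G mul inv one}.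
Arguments gmul1r {G mul inv one}.
Arguments open_setmul {G mul inv one}.
Arguments compact_setmul {G mul inv one}.
Arguments compact_setinv {G mul inv one}.
Arguments setmulS {G mul A A' S S'}.
Arguments setinvS {G inv A A'}.

Lemma amgm (R : realType) (u d t : R) : 0 < d -> 0 < t -> 0 <= u ->
  u <= (t * u ^+ 2 / d + d / t) / 2.
Proof.
move=> d0 t0 u0.
have h : 2 * u * d * t <= t^+2 * u^+2 + d^+2.
  have := sqr_ge0 (t * u - d).
  have -> : (t * u - d) ^+ 2 = t^+2 * u^+2 + d^+2 - 2 * u * d * t by ring.
  by rewrite subr_ge0.
have -> : (t * u ^+ 2 / d + d / t) / 2 = (t^+2 * u^+2 + d^+2) / (2 * d * t).
  by field; rewrite ?gt_eqF.
rewrite ler_pdivlMr; last by rewrite !mulr_gt0.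
by rewrite mulrA mulrCA mulrA.
Qed.

Lemma sum_sqrt (R : realType) r (a : 'I_r -> R) (d : 'I_r -> nat) :
  (forall i, 0 <= a i) -> (forall i, (0 < d i)%N) ->
  \sum_i a i / (d i)%:R <= 1 ->
  \sum_i Num.sqrt (a i) <= Num.sqrt (\sum_i d i)%:R.
Proof.
move=> a0 d0 hs.
case: r a d a0 d0 hs => [|r] a d a0 d0 hs.
  by rewrite big_ord0 sqrtr_ge0.
set D := (\sum_i d i)%N.
have D0 : (0 < D)%N.
  by rewrite /D big_ord_recl; apply: leq_trans (d0 ord0) (leq_addr _ _).
set t := Num.sqrt D%:R.
have t0 : 0 < t by rewrite sqrtr_gt0 ltr0n.
apply: (@le_trans _ _ (\sum_i ((t * a i / (d i)%:R + (d i)%:R / t) / 2))).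
  apply: ler_sum => i _.
  have di : 0 < (d i)%:R :> R by rewrite ltr0n.
  have := @amgm R _ _ _ di t0 (sqrtr_ge0 (a i)).
  by rewrite sqr_sqrtr.
rewrite -mulr_suml big_split /=.
have e1 : \sum_i t * a i / (d i)%:R = t * (\sum_i a i / (d i)%:R).
  by rewrite mulr_sumr; apply: eq_bigr => i _; rewrite mulrA.
have e2 : \sum_i (d i)%:R / t = D%:R / t by rewrite -mulr_suml -natr_sum.
rewrite e1 e2.
have -> : D%:R / t = t.
  by rewrite -[X in X / _](@sqr_sqrtr _ D%:R) // expr2 mulfK // gt_eqF.
have : t * (\sum_i a i / (d i)%:R) <= t * 1 by rewrite ler_pM2l.
lra.
Qed.

Lemma pw (R : realType) r (P : 'I_r -> bool) (d : 'I_r -> nat) :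
  (forall i, P i -> (#|[pred j | P j]| <= d i)%N) ->
  \sum_i (P i)%:R / (d i)%:R <= 1 :> R.
Proof.
move=> hd.
rewrite (bigID P) /= [X in _ + X]big1 ?addr0; last by move=> i Pi; rewrite (negbTE Pi) mul0r.
set n := #|[pred j | P j]|.
apply: (@le_trans _ _ (\sum_(i | P i) n%:R^-1)).
  apply: ler_sum => i Pi; rewrite Pi mul1r.
  have n0 : (0 < n)%N by apply/card_gt0P; exists i.
  by rewrite lef_pV2 ?posrE ?ltr0n ?ler_nat ?hd //; apply: leq_trans n0 (hd _ Pi).
rewrite sumr_const (_ : #|P| = n); last by apply: eq_card.
case: n => [|n]; first by rewrite mulr0n.
by rewrite -(mulr_natr (n.+1%:R^-1)) mulVf // pnatr_eq0.
Qed.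

Lemma int_bound (d : measure_display) (X : measurableType d) (R : realType)
  (nu : probability X R) r (A : 'I_r -> set X) (w : 'I_r -> R) :
  (forall i, measurable (A i)) -> (forall i, 0 <= w i) ->
  (forall x, \sum_i w i * \1_(A i) x <= 1) ->
  \sum_i fine (nu (A i)) * w i <= 1.
Proof.
move=> mA w0 hx.
have mf i : measurable_fun [set: X] (fun x => (w i * \1_(A i) x)%:E).
  apply/measurable_EFinP; apply: measurable_funM => //.
have f0 i x : [set: X] x -> (0 <= (w i * \1_(A i) x)%:E)%E.
  by move=> _; rewrite lee_fin mulr_ge0 // indicE.
have key : (\int[nu]_(x in [set: X]) (\sum_(i <- index_enum 'I_r) (w i * \1_(A i) x)%:E)%R <= 1)%E.
  apply: (@le_trans _ _ (\int[nu]_(x in [set: X]) (cst 1%E x))%E).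
    apply: ge0_le_integral => //.
    - move=> x _; apply: sume_ge0 => i _; exact: f0.
    - exact: emeasurable_sum.
    - move=> x _; rewrite sumEFin lee_fin /cst /=; exact: hx.
  by rewrite integral_cst // mul1e probability_le1.
rewrite ge0_integral_sum // in key.
have e i : (\int[nu]_(x in [set: X]) (w i * \1_(A i) x)%:E = (fine (nu (A i)) * w i)%:E)%E.
  rewrite (@integralZl_indic _ _ _ _ _ _ (fun _ => A i)) //; last first.
    by move=> h; exfalso; move: (w0 i); rewrite leNgt h.
  rewrite integral_indic // setIT EFinM fineK; last exact: fin_num_measure.
  by rewrite muleC.
have key2 : (\sum_i ((fine (nu (A i)) * w i)%:E) <= 1)%E.
  by under eq_bigr => i _ do rewrite -(e i).
by rewrite sumEFin lee_fin in key2.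
Qed.

Lemma mopen (G : ptopologicalType) (U : set G) : open U -> measurable (U : set (borel G)).
Proof. move=> oU. exact: sub_gen_smallest. Qed.
Lemma mclosed (G : ptopologicalType) (U : set G) : closed U -> measurable (U : set (borel G)).
Proof. move=> cU. rewrite -[U]setCK. apply: measurableC. apply: mopen. exact: closed_openC. Qed.

Arguments mopen {G U}.
Arguments mclosed {G U}.

Lemma cardP (T : finType) (f : pred T) : #|[pred x | f x]| = (\sum_x (f x : nat))%N.
Proof.
rewrite -sum1_card big_mkcond /=; apply: eq_bigr => x _.
by rewrite inE; case: (f x).
Qed.

Lemma cardQ (T : finType) (f : pred T) : #|[set x | f x]| = (\sum_x (f x : nat))%N.
Proof.
rewrite -sum1_card big_mkcond /=; apply: eq_bigr => x _.
have -> : (x \in [set x | f x]) = f x.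
  apply/idP/idP; first by rewrite in_setE.
  by move=> h; rewrite in_setE.
by case: (f x).
Qed.

Theorem lemma3p2 (R : realType) (G : ptopologicalType)
  (mul : G -> G -> G) (inv : G -> G) (one : G)
  (vol : {measure set (borel G) -> \bar R})
  (dX : measure_display) (X : measurableType dX) (act : X -> G -> X)
  (Omega_inf : set G) :
  is_topological_group mul inv one ->
  hausdorff_space G -> locally_compact [set: G] ->
  is_haar_measure mul vol ->
  is_right_action mul one act ->
  (forall (y : X) (U : set G), open U -> measurable (orbit_set act y U)) ->
  compact Omega_inf ->
  exists C : R, 0 < C /\
  forall (B0 : set G) (nu : probability X R) (r : nat) (y : 'I_r -> X),
    open B0 -> B0 one -> B0 `<=` Omega_inf ->
    let B := setmul mul B0 (setinv inv B0) in
    let B2 := setmul mul B B in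
    let B3 := setmul mul (setmul mul B B) B in
    \sum_(i < r) Num.sqrt (fine (nu (orbit_set act (y i) B)))
    <= C * (fine (vol B3) / fine (vol B0))
         * Num.sqrt (#|[set ij : 'I_r * 'I_r |
                        `[< orbit_set act (y ij.1) B2 `&`
                            orbit_set act (y ij.2) B2 !=set0 >] ]|)%:R.
Proof.
move=> hG hH _ hHaar hact hmeas cO.
exists 1; split; first by [].

move=> B0 nu r y oB0 B0one B0O; cbv zeta.
set B := setmul mul B0 (setinv inv B0).
set B2 := setmul mul B B.
set B3 := setmul mul B2 B.
case: (hG) => Ass Lid Linv _ _.
have invone : inv one = one by rewrite -[LHS]Lid (gmulV hG).
have oneB : B one.
  exists one => //; exists (inv one); [by exists one | exact: (gmulV hG)].
have oneB2 : B2 one by exists one => //; exists one => //; exact: (gmul1r hG).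
have BB2 : B `<=` B2 by move=> b Bb; exists b => //; exists one => //; exact: (gmul1r hG).
have B0B3 : B0 `<=` B3.
  move=> b Bb0; exists b; last (exists one => //; exact: (gmul1r hG)).
  apply: BB2; exists b => //; exists (inv one); first by exists one.
  by rewrite invone (gmul1r hG).
have oB : open B := open_setmul hG _ (setinv inv B0) oB0.
have oB2 : open B2 := open_setmul hG _ B oB.
have oB3 : open B3 := open_setmul hG _ B oB2.
set K := setmul mul Omega_inf (setinv inv Omega_inf).
set K3 := setmul mul (setmul mul K K) K.
have cK : compact K := compact_setmul hG _ _ cO (compact_setinv hG _ cO).
have cK3 : compact K3 := compact_setmul hG _ _ (compact_setmul hG _ _ cK cK) cK.
have BK : B `<=` K := setmulS B0O (setinvS B0O).
have B3K3 : B3 `<=` K3 := setmulS (setmulS BK BK) BK.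
case: hHaar => _ hfin hpos.
have mB0 : measurable (B0 : set (borel G)) := mopen oB0.
have mB3 : measurable (B3 : set (borel G)) := mopen oB3.
have mK3 : measurable (K3 : set (borel G)) := mclosed (compact_closed hH cK3).
have v3K : (vol B3 <= vol K3)%E := le_measure vol (mem_set mB3) (mem_set mK3) B3K3.
have v03 : (vol B0 <= vol B3)%E := le_measure vol (mem_set mB0) (mem_set mB3) B0B3.
have v3fin : (vol B3 < +oo)%E := le_lt_trans v3K (hfin _ cK3).
have v0pos : (0 < vol B0)%E := hpos _ oB0 (ex_intro _ one B0one).
have v0fin : (vol B0 < +oo)%E := le_lt_trans v03 v3fin.
have f0 : 0 < fine (vol B0) by apply: fine_gt0; rewrite v0pos v0fin.
have f03 : fine (vol B0) <= fine (vol B3).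
  apply: fine_le => //; rewrite ge0_fin_numE //; apply: measure_ge0.
have ratio : 1 <= fine (vol B3) / fine (vol B0) by rewrite ler_pdivlMr // mul1r.
set A := fun i => orbit_set act (y i) B.
have mA i : measurable (A i) := hmeas (y i) B oB.
set dd := fun i : 'I_r => #|[pred j | `[< orbit_set act (y i) B2 `&` orbit_set act (y j) B2 !=set0 >] ]|.
have hN : #|[set ij : 'I_r * 'I_r | `[< orbit_set act (y ij.1) B2 `&` orbit_set act (y ij.2) B2 !=set0 >] ]| = (\sum_i dd i)%N.
  rewrite cardQ /dd; symmetry.
  under eq_bigr => i _ do rewrite (@cardP _ (fun j => `[< orbit_set act (y i) B2 `&` orbit_set act (y j) B2 !=set0 >])).
  by rewrite pair_big.
rewrite hN mul1r.
apply: (@le_trans _ _ (Num.sqrt (\sum_i dd i)%:R)); last by apply: ler_peMl => //; exact: sqrtr_ge0.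
apply: (@sum_sqrt R r (fun i => fine (nu (A i))) dd).
- move=> i; apply: fine_ge0; apply: measure_ge0.
- move=> i; apply/card_gt0P; exists i; rewrite inE; apply/asboolP.
  apply/asboolP; exists (act (y i) one); split; exact: imageP.
- apply: (@int_bound _ _ _ nu r A (fun i => (dd i)%:R^-1)) => //.
  move=> x.
  have := @pw R r (fun i => x \in A i) dd.
  have -> : \sum_i (dd i)%:R^-1 * \1_(A i) x = \sum_i (x \in A i)%:R / (dd i)%:R :> R.
    by apply: eq_bigr => i _; rewrite indicE mulrC.
  apply => i xAi.
  apply: subset_leq_card; apply/fintype.subsetP => j; rewrite !inE => xAj.
  exists x; split.
  + by move/set_mem: xAi => [b Bb <-]; exists b => //; exact: BB2.
  + by case: xAj => [b Bb <-]; exists b => //; exact: BB2.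
Qed.
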